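(* Let $f,g\in\mathbb{Z}[t]$ be AC polynomials of degree $d$, with $a_j,b_j$ the coefficients of $t^j$ in $f,g$ respectively. Let $r>0$ and $\lambda$ be integers and suppose $\Lambda=f+\lambda t^{d+1}A_r+t^{d+r+1}g$ is an AC polynomial, with $|a_j|<|a_{j+1}|<|\lambda|$ and $|\lambda|>|b_j|>|b_{j+1}|$ for all $j$. Then for every integer $y$ with $1\le y\le r$, $\Lambda A_y$ is an AC polynomial with the same properties as $\Lambda$; namely $$\Lambda A_y=f_y+\lambda_y t^{d+y}A_{r-y+1}+t^{d+r+1}g_y,$$ where $f_y,g_y$ are AC polynomials of degree $d+y-1$ and $\lambda_y=-\epsilon_y\,y\,\lambda$. The absolute values of the coefficients of $f_y$ are monotonically increasing, those of $g_y$ monotonically decreasing, and all are less than $|\lambda_y|$. Furthermore, the coefficients of $f_y$ depend on the parity of $r$ but not on the actual value of $r$, and the coefficients of $g_y$ are independent of $r$.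
   Context: $\epsilon_x=(-1)^x$. For an integer $w$, $A_w=(t^w+\epsilon_{w-1})/(t+1)$; for $w>0$, $A_w=\sum_{j=0}^{w-1}\epsilon_jt^{w-1-j}$. For $f\in\mathbb{Z}[t]$ write $[f]_j$ for the coefficient of $t^j$. An AC (alternating coefficient) polynomial is a nonzero $f\in\mathbb{Z}[t]$ with $[f]_j[f]_{j+1}<0$ for all $j$ with $\min\deg f\le j<\deg f$ (where $\min\deg f$ is the lowest degree of a nonzero term). *)

(* Defs.v *)
From mathcomp Require Import all_boot all_order all_algebra.
Set Implicit Arguments. Unset Strict Implicit. Unset Printing Implicit Defensive.
Import Order.TTheory GRing.Theory Num.Theory.
Local Open Scope ring_scope.

Definition eps (x : nat) : int := (-1) ^+ x.

Definition Apoly (w : nat) : {poly int} :=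
  \sum_(j < w) (eps j)%:P * 'X^(w.-1 - j).

Definition mindeg (p : {poly int}) : nat := find (fun c : int => c != 0) p.

Definition degp (p : {poly int}) : nat := (size p).-1.

Definition ACpoly (p : {poly int}) : Prop :=
  p != 0 /\ forall j : nat, (mindeg p <= j)%N -> (j < degp p)%N -> p`_j * p`_j.+1 < 0.

Definition Lam (d : nat) (f g : {poly int}) (lam : int) (r : nat) : {poly int} :=
  f + lam%:P * 'X^(d.+1) * Apoly r + 'X^((d + r).+1) * g.

(* Main.v *)
Require Import Defs.
From mathcomp Require Import all_boot all_order all_algebra.
From mathcomp Require Import zify ring.
Import Order.TTheory GRing.Theory Num.Theory.
Local Open Scope ring_scope.



Lemma epsS n : eps n.+1 = - eps n.
Proof. by rewrite /eps exprS mulN1r. Qed.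
Lemma eps_odd n : eps n = (-1) ^+ odd n.
Proof. by rewrite /eps signr_odd. Qed.
Lemma eps_pm n : eps n = 1 \/ eps n = -1.
Proof. rewrite eps_odd; case: (odd n); [right|left]; by rewrite ?expr0 ?expr1. Qed.
Lemma epsD a b : eps (a + b) = eps a * eps b.
Proof. by rewrite /eps exprD. Qed.
Lemma eps_par a b : odd a = odd b -> eps a = eps b.
Proof. by rewrite !eps_odd => ->. Qed.
Lemma eps_parN a b : odd a = ~~ odd b -> eps a = - eps b.
Proof. rewrite !eps_odd => ->; by case: (odd b); rewrite /= ?expr0 ?expr1 ?opprK. Qed.
Lemma eps_norm n : `|eps n| = 1.
Proof. by case: (eps_pm n) => ->. Qed.

Lemma sum_widen (F : nat -> int) m N : (m <= N)%N ->
  (forall i, (m <= i < N)%N -> F i = 0) -> \sum_(i < m) F i = \sum_(i < N) F i.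
Proof.
move=> le h; rewrite -(subnKC le) big_split_ord /= [X in _ = _ + X]big1 ?addr0 // => i _.
apply: h; have := ltn_ord i; lia.
Qed.

Lemma coefA w k : (Apoly w)`_k = if (k < w)%N then eps (w.-1 - k) else 0.
Proof.
rewrite /Apoly coef_sum.
under eq_bigr => j _ do rewrite coefCM coefXn.
case: ifP => kw.
  have jlt : (w.-1 - k < w)%N by lia.
  rewrite (bigD1 (Ordinal jlt)) //= big1 ?addr0.
    by rewrite (_ : (k == w.-1 - (w.-1 - k))%N = true) ?mulr1 //; apply/eqP; lia.
  move=> j /eqP hj; case: eqP => e; last by rewrite mulr0.
  exfalso; apply: hj; apply: val_inj => /=; have := ltn_ord j; lia.
rewrite big1 // => j _; case: eqP => e; last by rewrite mulr0.
have := ltn_ord j; lia.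
Qed.



Lemma convo (p : {poly int}) y n : (p * Apoly y)`_n =
  \sum_(i < y) (if (i <= n)%N then eps (y.-1 - i) * p`_(n - i) else 0).
Proof.
rewrite mulrC coefM.
pose G i := if (i <= n)%N && (i < y)%N then eps (y.-1 - i) * p`_(n - i) else 0.
transitivity (\sum_(i < n.+1) G i).
  apply: eq_bigr => i _; rewrite coefA /G; have := ltn_ord i.
  case: ifP => iy; case: ifP => //; try lia; by rewrite mul0r.
transitivity (\sum_(i < y) G i); last first.
  apply: eq_bigr => i _; rewrite /G; have := ltn_ord i.
  by case: ifP => iy; case: ifP => //; lia.
rewrite (sum_widen G (n.+1) (n.+1 + y)); first last.
- move=> i hi; rewrite /G; case: ifP => // /andP []; lia.
- lia.
rewrite (sum_widen G y (n.+1 + y)) //; first last.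
- move=> i hi; rewrite /G; case: ifP => // /andP []; lia.
- lia.
Qed.



Lemma coefL d f g lam r m : (Lam d f g lam r)`_m =
  f`_m + (if (m < d.+1)%N then 0 else
           if (m - d.+1 < r)%N then lam * eps (r.-1 - (m - d.+1)) else 0)
   + (if (m < (d + r).+1)%N then 0 else g`_(m - (d + r).+1)).
Proof.
rewrite /Lam !coefD -mulrA coefCM !coefXnM coefA.
by case: ifP => _; rewrite ?mulr0 //; case: ifP => _; rewrite ?mulr0.
Qed.

Section L.
Variables (d : nat) (f g : {poly int}) (lam : int) (r : nat).
Hypothesis sf : (size f <= d.+1)%N.
Local Notation c m := ((Lam d f g lam r)`_m).

Lemma cL1 m : (m <= d)%N -> c m = f`_m.
Proof. move=> h; rewrite coefL; do 2 (case: ifP => ?; try lia); by rewrite !addr0. Qed.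

Lemma cL2 m : (d < m <= d + r)%N -> c m = lam * eps (d + r - m).
Proof.
move=> h; rewrite coefL (nth_default 0 (leq_trans sf _)); last lia.
case: ifP => ?; try lia; case: ifP => ?; try lia; case: ifP => ?; try lia.
rewrite add0r addr0; congr (_ * eps _); lia.
Qed.

Lemma cL3 m : (d + r < m)%N -> c m = g`_(m - (d + r).+1).
Proof.
move=> h; rewrite coefL (nth_default 0 (leq_trans sf _)); last lia.
case: ifP => ?; try lia; case: ifP => ?; try lia; case: ifP => ?; try lia.

Qed.
End L.



Definition aw (c : nat -> int) n i : int := if (i <= n)%N then `|c (n - i)%N| else 0.
Definition W (c : nat -> int) y n : int := \sum_(i < y) aw c n i.

Lemma aw_ge0 c n i : 0 <= aw c n i.
Proof. rewrite /aw; case: ifP => //. Qed.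

Lemma W_ge0 c y n : 0 <= W c y n.
Proof. by apply: sumr_ge0 => i _; apply: aw_ge0. Qed.

Lemma Pform (p : {poly int}) t y n :
  (forall m, p`_m = t * eps m * `|p`_m|) ->
  (p * Apoly y)`_n = t * eps y.-1 * eps n * W (fun m => p`_m) y n.
Proof.
move=> hs; rewrite convo /W mulr_sumr; apply: eq_bigr => i _.
rewrite /aw; case: ifP => hi; last by rewrite mulr0.
rewrite {1}hs.
have e : eps (y.-1 - i) * eps (n - i) = eps y.-1 * eps n.
  rewrite -!epsD; apply: eps_par; have := ltn_ord i; lia.
transitivity (t * (eps (y.-1 - i) * eps (n - i)) * `|p`_(n - i)|); first ring.
by rewrite e; ring.
Qed.

Lemma W_recl c y n : W c y.+1 n = `|c n| + \sum_(i < y) aw c n i.+1.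
Proof. by rewrite /W big_ord_recl /aw /= subn0. Qed.

Lemma W_recr c y n : W c y.+1 n = \sum_(i < y) aw c n i + aw c n y.
Proof. by rewrite /W big_ord_recr. Qed.

Lemma W_S c y n : W c y.+1 n.+1 = `|c n.+1| + \sum_(i < y) aw c n i.
Proof.
rewrite W_recl; congr (_ + _); apply: eq_bigr => i _; by rewrite /aw /= ltnS subSS.
Qed.

Lemma sum_aw_le c K k (h : nat -> nat) n : (forall m, `|c m| <= K) -> 0 <= K ->
  \sum_(i < k) aw c n (h i) <= K * k%:R.
Proof.
move=> hK K0; rewrite mulr_natr; have -> : K *+ k = \sum_(i < k) K by rewrite sumr_const card_ord.
 apply: ler_sum => i _.
by rewrite /aw; case: ifP.
Qed.

Lemma W_const c y n K : (y <= n.+1)%N -> (forall i, (i < y)%N -> `|c (n - i)%N| = K) ->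
  W c y n = K * y%:R.
Proof.
move=> hy hK; rewrite mulr_natr; have -> : K *+ y = \sum_(i < y) K by rewrite sumr_const card_ord.
 apply: eq_bigr => i _.
rewrite /aw; have := ltn_ord i => hi; case: ifP => ?; last lia. by rewrite hK.
Qed.

Lemma W_pos c y n i : (i < y)%N -> (i <= n)%N -> c (n - i)%N != 0 -> 0 < W c y n.
Proof.
move=> iy ni nz; rewrite /W (bigD1 (Ordinal iy)) //=.
rewrite -[0]addr0; apply: ltr_leD.
  by rewrite /aw ni normr_gt0.
by apply: sumr_ge0 => j _; apply: aw_ge0.
Qed.

Lemma W_zero c y n : (forall i, (i < y)%N -> (i <= n)%N -> c (n - i)%N = 0) -> W c y n = 0.
Proof.
move=> h; apply: big1 => i _; rewrite /aw; case: ifP => // hi.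
by rewrite h ?normr0.
Qed.



Lemma size_deg (p : {poly int}) b : (forall n, (b < n)%N -> p`_n = 0) -> p`_b != 0 ->
  size p = b.+1.
Proof.
move=> h nz; apply/eqP; rewrite eqn_leq; apply/andP; split.
  by apply/leq_sizeP => j hj; apply: h; lia.
rewrite ltnNge; apply/negP => hs; move: nz; by rewrite nth_default.
Qed.

Lemma degp_eq (p : {poly int}) b : (forall n, (b < n)%N -> p`_n = 0) -> p`_b != 0 ->
  degp p = b.
Proof. by move=> h nz; rewrite /degp (@size_deg p _ h nz). Qed.

Lemma AC_facts p : ACpoly p ->
  [/\ size p = (degp p).+1, (mindeg p <= degp p)%N,
      (forall n, (n < mindeg p)%N -> p`_n = 0) &
      (forall n, (mindeg p <= n <= degp p)%N -> p`_n != 0)].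
Proof.
case=> nz hac.
have sp : size p = (degp p).+1.
  rewrite /degp prednK // lt0n size_poly_eq0 //.
have lc : p`_(degp p) != 0.
  by rewrite /degp -lead_coefE lead_coef_eq0.
have hm : (mindeg p <= degp p)%N.
  rewrite leqNgt; apply/negP => h.
  have := before_find 0 h; rewrite /= => /negbFE/eqP e.
  by move: lc; rewrite e eqxx.
split => //.
  move=> n h; have := before_find 0 h; by rewrite /= => /negbFE/eqP.
move=> n /andP [h1 h2]; case: (ltngtP n (degp p)) => h3; last 1 first.
  by rewrite h3.
  have := hac n h1 h3; apply: contraTneq => ->; by rewrite mul0r ltxx.
lia.
Qed.

Lemma sign_pat p : ACpoly p -> exists t : int, (t = 1 \/ t = -1) /\
  forall n, p`_n = t * eps n * `|p`_n|.
Proof.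
move=> hp; have [sp hm hlo hnz] := AC_facts _ hp; case: hp => nz hac.
set m0 := mindeg p in hm hlo hnz hac *; set D := degp p in sp hm hnz hac *.
exists (if 0 < p`_m0 * eps m0 then 1 else -1); split; first by case: ifP; [left|right].
set t := (if _ then _ else _).
have ht : t = 1 \/ t = -1 by rewrite /t; case: ifP; [left|right].
have key : forall k, (m0 + k <= D)%N -> p`_(m0 + k) = t * eps (m0 + k) * `|p`_(m0 + k)|.
  elim=> [|k IH] hk.
    rewrite addn0 /t; case: ifP; case: (eps_pm m0) => -> h; lia.
  have hk' : (m0 + k <= D)%N by lia.
  have := hac (m0 + k) (leq_addr _ _) ltac:(lia).
  move: (IH hk'); rewrite addnS epsS.
  case: ht => ->; case: (eps_pm (m0 + k)) => ->; move: (p`_(m0 + k)) (p`_(m0 + k).+1) => x y; case: (lerP 0 x) => ?; case: (lerP 0 y) => ?; nia.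
move=> n; case: (ltnP n m0) => h1.
  by rewrite hlo // normr0 mulr0.
case: (ltnP D n) => h2.
  by rewrite nth_default ?normr0 ?mulr0 // sp.
have := key (n - m0)%N; rewrite subnKC //; apply; lia.
Qed.

Lemma norm_form (u e w : int) : (u = 1 \/ u = -1) -> (e = 1 \/ e = -1) -> 0 <= w ->
  `|u * e * w| = w.
Proof. by case=> ->; case=> -> h; lia. Qed.

Lemma AC_of_form (p : {poly int}) (u : int) (w : nat -> int) a b :
  (u = 1 \/ u = -1) -> (a <= b)%N ->
  (forall n, p`_n = u * eps n * w n) ->
  (forall n, (n < a)%N -> w n = 0) ->
  (forall n, (b < n)%N -> w n = 0) ->
  (forall n, (a <= n <= b)%N -> 0 < w n) ->
  ACpoly p /\ degp p = b.
Proof.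
move=> hu hab hp h0 h1 hpos.
have nzb : p`_b != 0.
  rewrite hp; have := hpos b ltac:(lia); case: hu => ->; case: (eps_pm b) => ->; lia.
have hz : forall n, (b < n)%N -> p`_n = 0.
  move=> n hn; by rewrite hp h1 // mulr0.
have hd : degp p = b by apply: degp_eq.
have hsz : size p = b.+1 by apply: size_deg.
have nz : p != 0 by apply: contraNneq nzb => ->; rewrite coef0.
split => //; split => // j hj hjb.
have ha : (a <= j)%N.
  rewrite leqNgt; apply/negP => hlt.
  have hs : (mindeg p < size p)%N.
    by rewrite hsz; lia.
  rewrite /mindeg -has_find in hs.
  have := nth_find 0 hs; rewrite -/(mindeg p) /= hp h0 ?mulr0 ?eqxx //; lia.
rewrite !hp epsS hd in hjb *.
have := hpos j ltac:(lia); have := hpos j.+1 ltac:(lia).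
move: (w j) (w j.+1) => x y.
case: hu => ->; case: (eps_pm j) => -> ? ?; nia.
Qed.



Lemma eq_decomp d (f g : {poly int}) (lam : int) r y : (size f <= d.+1)%N -> (size g <= d.+1)%N -> (1 <= y <= r)%N ->
  Lam d f g lam r * Apoly y =
  \poly_(n < d + y) (Lam d f g lam r * Apoly y)`_n
  + (- (eps y * y%:R * lam))%:P * 'X^(d + y) * Apoly (r - y).+1
  + 'X^((d + r).+1) * \poly_(k < d + y) (Lam d f g lam r * Apoly y)`_(k + (d + r).+1).
Proof.
move=> sf sg hy; apply/polyP => n.
rewrite !coefD -mulrA coefCM !coefXnM coef_poly coefA coef_poly.
case: (ltnP n (d + y)) => h1.
  rewrite (_ : (n < (d + r).+1)%N = true); last lia.
  by rewrite mulr0 !addr0.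
rewrite add0r.
case: (ltnP n (d + r).+1) => h2.
  rewrite ifT; last lia.
  rewrite addr0 convo.
  transitivity (\sum_(i < y) (lam * eps (y.-1 + (d + r - n)))).
    apply: eq_bigr => i _; have := ltn_ord i => hi; rewrite ifT; last lia.
    rewrite cL2 //; last lia.
    rewrite mulrCA -epsD; congr (_ * eps _); lia.
  rewrite sumr_const card_ord -mulr_natr.
  have e : eps (y.-1 + (d + r - n)) = - (eps y * eps ((r - y).+1.-1 - (n - (d + y)))).
    rewrite -epsD; apply: eps_parN; lia.
  rewrite e; ring.
rewrite ifF; last lia.
rewrite mulr0 add0r; case: ifP => h3.
  by rewrite subnK.
rewrite convo big1 // => i _; case: ifP => // hi.
have := ltn_ord i => hio; rewrite cL3 //; last lia.
move/negbT: h3; rewrite -leqNgt => h3; rewrite nth_default ?mulr0 //. move: hi hio; move: (nat_of_ord i) => j hi hio. move: (size g) sg => s sg. lia.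
Qed.

Lemma c_shift d (f g : {poly int}) (lam : int) r r' y k i : (size f <= d.+1)%N -> (y <= r)%N -> (y <= r')%N -> (i < y)%N ->
  (Lam d f g lam r)`_(k + (d + r).+1 - i) = (Lam d f g lam r')`_(k + (d + r').+1 - i).
Proof.
move=> sf h1 h2 hi; case: (leqP i k) => hk.
  rewrite !cL3 //; try lia. congr (g`_ _); lia.
rewrite !cL2 //; try lia. congr (_ * eps _); lia.
Qed.

Lemma c_par d (f g : {poly int}) (lam : int) r r' m : (size f <= d.+1)%N -> (m <= d + r)%N -> (m <= d + r')%N ->
  odd r' = odd r -> (Lam d f g lam r)`_m = (Lam d f g lam r')`_m.
Proof.
move=> sf h1 h2 ho; case: (leqP m d) => hm.
  by rewrite !cL1.
rewrite !cL2 //; try lia. congr (_ * _); apply: eps_par; lia.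
Qed.



Theorem proposition1p1 (d : nat) (f g : {poly int}) (lam : int) (r : nat) :
  ACpoly f -> ACpoly g -> degp f = d -> degp g = d ->
  (forall j : nat, (j < d)%N -> `|f`_j| < `|f`_j.+1|) ->
  (forall j : nat, (j < d)%N -> `|g`_j| > `|g`_j.+1|) ->
  (forall j : nat, (j <= d)%N -> `|f`_j| < `|lam| /\ `|g`_j| < `|lam|) ->
  (0 < r)%N -> ACpoly (Lam d f g lam r) ->
  forall y : nat, (1 <= y <= r)%N ->
    let lamy : int := - (eps y * y%:R * lam) in
    ACpoly (Lam d f g lam r * Apoly y) /\
    exists fy gy : {poly int},
      [/\ ACpoly fy, ACpoly gy, degp fy = (d + y).-1, degp gy = (d + y).-1 &
        Lam d f g lam r * Apoly y
          = fy + lamy%:P * 'X^(d + y) * Apoly (r - y).+1 + 'X^((d + r).+1) * gy ] /\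
      (forall j : nat, (j < (d + y).-1)%N -> `|fy`_j| < `|fy`_j.+1|) /\
      (forall j : nat, (j < (d + y).-1)%N -> `|gy`_j| > `|gy`_j.+1|) /\
      (forall j : nat, (j <= (d + y).-1)%N -> `|fy`_j| < `|lamy| /\ `|gy`_j| < `|lamy|) /\
      (forall r' : nat, (0 < r')%N -> (y <= r')%N -> ACpoly (Lam d f g lam r') ->
         exists fy' : {poly int},
           (size fy' <= d + y)%N /\
           Lam d f g lam r' * Apoly y
             = fy' + lamy%:P * 'X^(d + y) * Apoly (r' - y).+1 + 'X^((d + r').+1) * gy /\
           (odd r' = odd r -> fy' = fy)).
Proof.
move=> hf hg df dg fmono gmono bnd r0 hL y hy lamy.
have [szf fhm _ fnz] := AC_facts _ hf.
have [szg gm0 _ gnz] := AC_facts _ hg.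
rewrite df in szf fnz fhm; rewrite dg in szg gnz gm0.
have sf : (size f <= d.+1)%N by rewrite szf.
have sg : (size g <= d.+1)%N by rewrite szg.
have fd : f`_d != 0 by apply: fnz; move: fhm; move: (mindeg f) => q; lia.
have gd : g`_d != 0 by apply: gnz; lia.
have fch : forall i k, (i < k <= d)%N -> `|f`_i| < `|f`_k|.
  move=> i k /andP [h1 h2]; elim: k h1 h2 => [|k IH] // h1 h2.
  have := fmono k ltac:(lia); case: (ltngtP i k) => hik; [|lia|].
    by move=> /(lt_trans (IH hik ltac:(lia))).
  by rewrite hik.
have gch : forall i k, (i < k <= d)%N -> `|g`_k| < `|g`_i|.
  move=> i k /andP [h1 h2]; elim: k h1 h2 => [|k IH] // h1 h2.
  have := gmono k ltac:(lia); case: (ltngtP i k) => hik; [|lia|].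
    by move=> h; apply: (lt_trans h (IH hik ltac:(lia))).
  by rewrite hik.
have lam0 : 0 < `|lam|.
  have [h _] := bnd 0%N (leq0n _); exact: le_lt_trans (normr_ge0 _) h.
set L := Lam d f g lam r.
set c := fun m => L`_m.
have cb : forall m, `|c m| <= `|lam|.
  move=> m; rewrite /c /L; case: (leqP m d) => h1.
    by rewrite cL1 //; have [h _] := bnd m h1; apply: ltW.
  case: (leqP m (d + r)) => h2.
    by rewrite cL2 ?normrM ?eps_norm ?mulr1 //; lia.
  rewrite cL3 //; case: (leqP (m - (d + r).+1) d) => h3.
    by have [_ h] := bnd _ h3; apply: ltW.
  rewrite nth_default; [by rewrite normr0 ltW | rewrite szg; lia].
have [szL m0L hlo hnz] := AC_facts _ hL.
set D := ((d + r).+1 + d)%N.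
have degL : degp L = D.
  apply: degp_eq.
    move=> n hn; rewrite /L cL3 //; last lia.
    rewrite nth_default // szg; lia.
  rewrite /L cL3 //; last lia.
  by rewrite (_ : (D - (d + r).+1)%N = d) //; lia.
rewrite degL in szL m0L hnz.
have m0d : (mindeg L <= d)%N.
  rewrite leqNgt; apply/negP => h; move: (hlo d h); rewrite /L cL1 //.
  by move/eqP; rewrite (negbTE fd).
have [t [ht hsL]] := sign_pat _ hL.
set u := t * eps y.-1.
have hu : u = 1 \/ u = -1 by rewrite /u; case: ht => ->; case: (eps_pm y.-1) => ->; lia.
have PF : forall n, (L * Apoly y)`_n = u * eps n * W c y n.
  by move=> n; rewrite (Pform _ t).
have Wpos : forall n, (mindeg L <= n <= D + y.-1)%N -> 0 < W c y n.
  move=> n hn; case: (leqP n D) => h.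
    apply: (@W_pos c y n 0%N); try lia; rewrite subn0; apply: hnz; rewrite -/L; lia.
  apply: (@W_pos c y n (n - D)%N); try lia.
  rewrite (_ : (n - (n - D))%N = D); last lia.
  apply: hnz; rewrite -/L; lia.
have Wlo : forall n, (n < mindeg L)%N -> W c y n = 0.
  move=> n hn; apply: W_zero => i hi hin; apply: hlo; rewrite -/L; lia.
have Whi : forall n, (D + y.-1 < n)%N -> W c y n = 0.
  move=> n hn; apply: W_zero => i hi hin; rewrite /c nth_default // szL; lia.
have [PAC Pdeg] : ACpoly (L * Apoly y) /\ degp (L * Apoly y) = (D + y.-1)%N.
  apply: (AC_of_form _ u (W c y) (mindeg L) (D + y.-1)%N) => //; try lia.
split => //.
set fy := \poly_(n < d + y) (L * Apoly y)`_n.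
set gy := \poly_(k < d + y) (L * Apoly y)`_(k + (d + r).+1).
have fyc : forall n, fy`_n = u * eps n * (if (n < d + y)%N then W c y n else 0).
  by move=> n; rewrite coef_poly; case: ifP => _; rewrite ?PF ?mulr0.
set u' := u * eps (d + r).+1.
have hu' : u' = 1 \/ u' = -1.
  by rewrite /u'; case: hu => ->; case: (eps_pm (d + r).+1) => ->; lia.
have gyc : forall k, gy`_k = u' * eps k *
    (if (k < d + y)%N then W c y (k + (d + r).+1) else 0).
  move=> k; rewrite coef_poly; case: ifP => _; last by rewrite !mulr0.
  by rewrite PF epsD /u'; ring.
have [fyAC fydeg] : ACpoly fy /\ degp fy = (d + y).-1.
  apply: (AC_of_form _ u (fun n => if (n < d + y)%N then W c y n else 0) (mindeg L) (d + y).-1) => //; try lia.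
  - by move=> n hn; case: ifP => // _; apply: Wlo.
  - by move=> n hn; rewrite ifF //; lia.
  - by move=> n hn; rewrite ifT; [apply: Wpos|]; lia.
have [gyAC gydeg] : ACpoly gy /\ degp gy = (d + y).-1.
  apply: (AC_of_form _ u' (fun k => if (k < d + y)%N then W c y (k + (d + r).+1) else 0) 0 (d + y).-1) => //; try lia.
  - by move=> n hn; rewrite ifF //; lia.
  - by move=> n hn; rewrite ifT; [apply: Wpos|]; lia.
have fyn : forall n, (n < d + y)%N -> `|fy`_n| = W c y n.
  by move=> n hn; rewrite fyc ifT // norm_form // ?W_ge0 //; apply: eps_pm.
have gyn : forall n, (n < d + y)%N -> `|gy`_n| = W c y (n + (d + r).+1).
  by move=> n hn; rewrite gyc ifT // norm_form // ?W_ge0 //; apply: eps_pm.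
have nlamy : `|lamy| = `|lam| * y%:R.
  by rewrite /lamy normrN !normrM eps_norm mul1r normr_nat mulrC.
have [y' ey] : exists y', y = y'.+1 by exists y.-1; lia.
exists fy, gy; split.
  split => //; exact: eq_decomp.
split.
  move=> j hj; rewrite !fyn; try lia.
  have key : aw c j y' < `|c j.+1|.
    rewrite /aw /c /L /=; case: ifP => h2; case: (leqP j.+1 d) => h1.
    - rewrite (cL1 _ _ _ _ _ sf (j - y')%N); last lia.
      rewrite (cL1 _ _ _ _ _ sf j.+1) //; apply: fch; lia.
    - rewrite (cL1 _ _ _ _ _ sf (j - y')%N); last lia.
      rewrite (cL2 _ _ _ _ _ sf j.+1); last lia.
      rewrite normrM eps_norm mulr1. by have [h _] := bnd (j - y')%N ltac:(lia).
    - rewrite (cL1 _ _ _ _ _ sf j.+1) //.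
      apply: le_lt_trans (normr_ge0 f`_0) _; apply: fch; lia.
    - rewrite (cL2 _ _ _ _ _ sf j.+1); last lia. by rewrite normrM eps_norm mulr1.
  rewrite ey W_S W_recr; lia.
split.
  move=> k hk; rewrite !gyn; try lia.
  have key : `|c (k + (d + r).+1).+1| < aw c (k + (d + r).+1) y'.
    rewrite /aw ifT; last lia.
    rewrite /c /L /= (cL3 _ _ _ _ _ sf); last lia.
    rewrite (_ : ((k + (d + r).+1).+1 - (d + r).+1)%N = k.+1); last lia.
    case: (leqP y' k) => h1.
      rewrite (cL3 _ _ _ _ _ sf); last lia.
      rewrite (_ : (k + (d + r).+1 - y' - (d + r).+1)%N = (k - y')%N); last lia.
      case: (leqP k.+1 d) => h2; first by apply: gch; lia.
      rewrite (nth_default _ (_ : size g <= k.+1)%N) ?normr0; last by rewrite szg.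
      apply: le_lt_trans (normr_ge0 g`_d) _; apply: gch; lia.
    rewrite (cL2 _ _ _ _ _ sf); last lia. rewrite normrM eps_norm mulr1.
    case: (leqP k.+1 d) => h2; first by have [_ h] := bnd k.+1 h2.
    by rewrite (nth_default _ (_ : size g <= k.+1)%N) ?normr0 //; rewrite szg.
  rewrite addSn ey W_S W_recr; lia.
split.
  move=> j hj; rewrite nlamy; split.
    rewrite fyn; last lia. rewrite ey W_recr.
    have hS : \sum_(i < y') aw c j i <= `|lam| * y'%:R :=
      sum_aw_le c `|lam| y' (fun i => i) j cb (ltW lam0).
    have ha : aw c j y' < `|lam|.
      rewrite /aw; case: ifP => h; last exact lam0.
      rewrite /c /L /= (cL1 _ _ _ _ _ sf); last lia.
      by have [hh _] := bnd (j - y')%N ltac:(lia).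
    rewrite -[y'.+1]addn1 natrD mulrDr mulr1; lia.
  rewrite gyn; last lia. rewrite ey W_recl.
  have hS : \sum_(i < y') aw c (j + (d + r).+1) i.+1 <= `|lam| * y'%:R :=
    sum_aw_le c `|lam| y' (fun i => i.+1) _ cb (ltW lam0).
  have hc : `|c (j + (d + r).+1)%N| < `|lam|.
    rewrite /c /L /= (cL3 _ _ _ _ _ sf); last lia.
    rewrite (_ : (j + (d + r).+1 - (d + r).+1)%N = j); last lia.
    case: (leqP j d) => h; first by have [_ hh] := bnd j h.
    by rewrite nth_default ?normr0 // szg.
  rewrite -[y'.+1]addn1 natrD mulrDr mulr1; lia.
move=> r' r'0 hr' hL'.
exists (\poly_(n < d + y) (Lam d f g lam r' * Apoly y)`_n); split; first exact: size_poly.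
split.
  have E := eq_decomp d f g lam r' y sf sg ltac:(lia); rewrite {1}E.
  congr (_ + _ * _).
  apply/polyP => k; rewrite !coef_poly; case: ifP => // hk.
  rewrite !convo; apply: eq_bigr => i _; have := ltn_ord i => hi; rewrite !ifT; try lia.
  congr (_ * _); symmetry; apply: (c_shift d f g lam r r' y k i sf); lia.
move=> ho; apply/polyP => n; rewrite !coef_poly; case: ifP => // hn.
rewrite !convo; apply: eq_bigr => i _; case: ifP => // hi.
congr (_ * _); apply: c_par; [exact: sf | lia | lia | by rewrite ho].
Qed.
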